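(* For every $m\ge 1$, the Zimin word $Z_m$ is minimal for the ai-semiring $\mathcal{B}_2^1$; that is, if $w$ is a word such that $\mathcal{B}_2^1$ satisfies the identity $w+Z_m=Z_m$, then $w=Z_m$.
   Context: Words are finite nonempty sequences of variables from a countably infinite set. Zimin words are defined by $Z_1=x_1$, $Z_{m+1}=Z_m x_{m+1} Z_m$ with distinct variables $x_1,x_2,\dots$. $B_2^1$ is the six-element monoid with zero $\{1,c,d,cd,dc,0\}$ presented as $\langle c,d\mid cdc=c,\ dcd=d,\ c^2=d^2=0\rangle$. $\mathcal{B}_2^1$ is the ai-semiring $(B_2^1,+,\cdot)$ where $+$ is the join for the partial order in which $0$ is the greatest element, $c,d,cd,dc$ are pairwise incomparable and all lie below $0$, $1<cd$, $1<dc$, and there are no other relations (so $c,d,1$ are minimal elements). An identity $p\leqslant p'$ means $p+p'=p'$; an identity holds in an ai-semiring if it holds under every substitution of elements for variables (words evaluated as products). *)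

(* Defs.v *)
From mathcomp Require Import all_boot.
Set Implicit Arguments. Unset Strict Implicit. Unset Printing Implicit Defensive.

(* The six elements of B_2^1 = <c,d | cdc=c, dcd=d, c^2=d^2=0> with 1 adjoined. *)
Inductive B21 := One | Cc | Dd | CD | DC | Zero.

Definition b_mul (x y : B21) : B21 :=
  match x, y with
  | One, _ => y
  | _, One => x
  | Zero, _ => Zero
  | _, Zero => Zero
  | Cc, Cc => Zero | Cc, Dd => CD | Cc, CD => Zero | Cc, DC => Cc
  | Dd, Cc => DC | Dd, Dd => Zero | Dd, CD => Dd | Dd, DC => Zero
  | CD, Cc => Cc | CD, Dd => Zero | CD, CD => CD | CD, DC => Zero
  | DC, Cc => Zero | DC, Dd => Dd | DC, CD => Zero | DC, DC => DC
  end.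

(* Addition of the ai-semiring: join for the order with 0 on top,
   c, d, cd, dc pairwise incomparable, 1 < cd, 1 < dc. *)
Definition b_add (x y : B21) : B21 :=
  match x, y with
  | One, One => One | Cc, Cc => Cc | Dd, Dd => Dd | CD, CD => CD | DC, DC => DC
  | One, CD => CD | CD, One => CD
  | One, DC => DC | DC, One => DC
  | _, _ => Zero
  end.

(* Words: nonempty sequences of variables; variables are natural numbers
   (x_i is represented by i). *)
Definition word := seq nat.

Definition b_eval (phi : nat -> B21) (w : word) : B21 :=
  foldr (fun x acc => b_mul (phi x) acc) One w.

Definition satisfies_le (p p' : word) : Prop :=
  forall phi : nat -> B21, b_add (b_eval phi p) (b_eval phi p') = b_eval phi p'.

Fixpoint zimin (m : nat) : word :=
  match m with
  | 0 => [::]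
  | k.+1 => zimin k ++ k.+1 :: zimin k
  end.

(* Main.v *)
Require Import Defs.
From mathcomp Require Import all_boot.
From mathcomp Require Import zify.

Definition isDd (a : B21) : bool := if a is Dd then true else false.
Lemma isDdP a : isDd a -> a = Dd. Proof. by case: a. Qed.

Fixpoint interleave (k : nat) (s : seq nat) : seq nat :=
  match s with [::] => [:: k] | a :: s' => k :: a :: interleave k s' end.

Fixpoint Y (m k : nat) : seq nat :=
  match m with 0 => [::] | m'.+1 => interleave k (Y m' k.+1) end.

Lemma interleave_cat k u a v :
  interleave k (u ++ a :: v) = interleave k u ++ a :: interleave k v.
Proof. by elim: u => [|x u IH] //=; rewrite IH. Qed.

Lemma Y_S m k : Y m.+1 k = Y m k ++ (k + m) :: Y m k.
Proof.
elim: m k => [|m IH] k; first by rewrite addn0.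
rewrite -[Y m.+2 k]/(interleave k (Y m.+1 k.+1)) IH interleave_cat.
by rewrite addSnnS.
Qed.

Lemma zimin_Y m : zimin m = Y m 1.
Proof. by elim: m => [|m IH] //; rewrite Y_S -IH add1n. Qed.

Lemma mem_interleave x k s : (x \in interleave k s) = (x == k) || (x \in s).
Proof.
elim: s => [|a s IH] /=; first by rewrite inE orbF.
by rewrite !inE IH; case: (x == k); case: (x == a).
Qed.

Lemma Y_range m k x : x \in Y m k -> (k <= x) && (x < k + m).
Proof.
elim: m k => [|m IH] k //=.
rewrite mem_interleave => /orP [/eqP -> | /IH]; lia.
Qed.

Lemma eval_interleave phi k s : phi k = Cc -> all (fun x => isDd (phi x)) s ->
  b_eval phi (interleave k s) = Cc.
Proof.
move=> Hk; elim: s => [|a s IH] /=; first by rewrite Hk.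
by move/andP => [/isDdP Ha Hs]; rewrite Hk Ha IH.
Qed.

Lemma eval_drop psi k s : k \notin s ->
  b_eval (fun x => if x == k then One else psi x) (interleave k s) = b_eval psi s.
Proof.
elim: s => [|a s IH] /=; first by rewrite eqxx.
rewrite inE negb_or => /andP [Ha Hs].
rewrite eqxx IH //. have -> : (a == k) = false by rewrite eq_sym; apply/negbTE.
by [].
Qed.

Lemma mul_One a b : b_mul a b = One -> a = One /\ b = One.
Proof. by case: a; case: b. Qed.

Lemma mul_Cc a b : a = Cc \/ a = Dd \/ a = Zero -> b_mul a b = Cc ->
  a = Cc /\ (b = One \/ b = DC).
Proof. by case: a; case: b => //= [] [|[|]] //; auto. Qed.

Lemma mul_DC a b : a = Cc \/ a = Dd \/ a = Zero -> b_mul a b = DC ->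
  a = Dd /\ b = Cc.
Proof. by case: a; case: b => //= [] [|[|]] //; auto. Qed.

Section Parse.
Variable phi : nat -> B21.
Variable k : nat.
Hypothesis Hv : forall x, phi x = Cc \/ phi x = Dd \/ phi x = Zero.
Hypothesis Hc : forall x, phi x = Cc -> x = k.

Lemma eval_one r : b_eval phi r = One -> r = [::].
Proof.
case: r => [|y r] //= /mul_One [E _].
by case: (Hv y) => [|[|]]; rewrite E.
Qed.

Lemma parse n : forall w, size w <= n -> b_eval phi w = Cc ->
  exists w', w = interleave k w' /\ all (fun x => isDd (phi x)) w'.
Proof.
elim: n => [|n IH] [|x r] //= Hs.
move/(@mul_Cc _ _ (Hv x)) => [Ex [Er|Er]].
  by exists [::]; rewrite (Hc _ Ex) (eval_one _ Er).
move: Er Hs; case: r => [|y r'] //= /(@mul_DC _ _ (Hv y)) [Ey Er'] Hs.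
have [w'' [E1 E2]] := IH r' ltac:(simpl in Hs; lia) Er'.
exists (y :: w''); split; first by rewrite (Hc _ Ex) E1.
by rewrite /= Ey.
Qed.
End Parse.

Lemma step m k w : satisfies_le w (Y m.+1 k) ->
  exists w', w = interleave k w' /\ all (fun x => (k < x) && (x < k + m.+1)) w'.
Proof.
move=> Hsat.
pose phi := fun x => if x == k then Cc
  else if (k < x) && (x < k + m.+1) then Dd else Zero.
have H := Hsat phi.
have EZ : b_eval phi (Y m.+1 k) = Cc.
  apply: eval_interleave; first by rewrite /phi eqxx.
  apply/allP => x /Y_range Hx; rewrite /phi.
  have -> : (x == k) = false by apply/eqP; lia.
  have -> : (k < x) && (x < k + m.+1) by lia.
  by [].
rewrite EZ in H.
have Ew : b_eval phi w = Cc by move: H; case: (b_eval phi w).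
have Hv : forall x, phi x = Cc \/ phi x = Dd \/ phi x = Zero.
  move=> x; rewrite /phi; case: (x == k); auto.
  by case: ((k < x) && (x < k + m.+1)); auto.
have Hc : forall x, phi x = Cc -> x = k.
  move=> x; rewrite /phi; case: eqP => // _.
  by case: ((k < x) && (x < k + m.+1)).
have [w' [E1 E2]] := @parse phi k Hv Hc (size w) w (leqnn _) Ew.
exists w'; split => //.
apply/allP => x /(allP E2); rewrite /phi.
case: eqP => // _. by case: ((k < x) && (x < k + m.+1)).
Qed.

Lemma main m : forall k w, satisfies_le w (Y m.+1 k) -> w = Y m.+1 k.
Proof.
elim: m => [|m IH] k w H.
  have [w' [E1 E2]] := step _ _ _ H.
  case: w' E1 E2 => [|a w''] E1 /=; first by rewrite E1.
  lia.
have [w' [E1 E2]] := step _ _ _ H.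
have Hk : k \notin w'.
  apply/negP => /(allP E2); lia.
have HkY : k \notin Y m.+1 k.+1.
  apply/negP => /Y_range; lia.
have Hs : satisfies_le w' (Y m.+1 k.+1).
  move=> psi.
  have := H (fun x => if x == k then One else psi x).
  change (Y m.+2 k) with (interleave k (Y m.+1 k.+1)).
  by rewrite E1 !eval_drop.
by rewrite E1 (IH _ _ Hs).
Qed.

Theorem lemma3p7 (m : nat) (w : word) :
  1 <= m -> w <> [::] -> satisfies_le w (zimin m) -> w = zimin m.
Proof.
case: m => [|m] // _ _; rewrite zimin_Y; exact: main.
Qed.
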